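(* Consider the algorithm MF-PSRO(Nash) run on a discrete mean-field game (setting in the context): start with $\Pi_1=\{\pi_1\}$ for some $\pi_1\in\Pi$ and $\nu_1=\delta_{\pi_1}$; at step $n$, pick $\pi^{new}\in\arg\max_{\pi\in\Pi}J(\pi,\mu(\nu_n))$ and set $\Pi_{n+1}=\Pi_n\cup\{\pi^{new}\}$; if $\Pi_{n+1}=\Pi_n$ the algorithm terminates, otherwise it sets $\nu_{n+1}\in\arg\min_{\nu\in\Delta(\Pi_{n+1})}\max_{\pi_i\in\Pi_{n+1}}\big(J(\pi_i,\mu(\nu))-J(\pi(\nu),\mu(\nu))\big)$ and continues. Suppose the algorithm terminates at step $n$ and $\nu_n$ is a restricted mean-field Nash equilibrium for $\Pi_n$, i.e. $J(\pi_i,\mu(\nu_n))\le J(\pi(\nu_n),\mu(\nu_n))$ for all $\pi_i\in\Pi_n$. Then $\pi(\nu_n)$ is a mean-field Nash equilibrium of the full game: $J(\pi,\mu(\nu_n))\le J(\pi(\nu_n),\mu(\nu_n))$ for all $\pi\in\Pi$.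
   Context: A discrete mean-field game consists of a finite state set $\mathcal X$, a finite action set $\mathcal A$, a reward $r:\mathcal X\times\mathcal A\times\Delta(\mathcal X)\to\mathbb R$, transition probabilities $p(x'\mid x,a)$ not depending on the population distribution, and an initial distribution $\mu_0\in\Delta(\mathcal X)$. A policy is a map $\pi:\mathcal X\to\Delta(\mathcal A)$; $\Pi$ is the finite set of deterministic policies. $\mu^\pi$ denotes the state occupancy measure of policy $\pi$ (either $\gamma$-discounted, $\mu^\pi(x)=\mu_0(x)+\gamma\sum_{x',a}p(x\mid x',a)\pi(x',a)\mu^\pi(x')$, or finite-horizon with time in the state). The expected payoff is $J(\pi,\mu)=\sum_{x,a}\mu^\pi(x)\pi(x,a)r(x,a,\mu)$. For a distribution $\nu$ over a finite set of policies, $\mu(\nu)=\sum_\pi\nu(\pi)\mu^\pi$, and $\pi(\nu)$ is the policy that samples a policy from $\nu$ at the start and plays it throughout, so $J(\pi(\nu),\mu)=\sum_\pi\nu(\pi)J(\pi,\mu)$ and $\mu^{\pi(\nu)}=\mu(\nu)$. *)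

(* Defs.v *)
From HB Require Import structures.
From mathcomp Require Import all_boot all_order all_algebra.
Set Implicit Arguments. Unset Strict Implicit. Unset Printing Implicit Defensive.
Import Order.TTheory GRing.Theory Num.Theory.
Local Open Scope ring_scope.

(* Deterministic policies X -> A (the finite set Pi of the paper). *)
Definition dpol (X A : finType) := {ffun X -> A}.

Definition dpol_prob (X A : finType) (R : numDomainType) (pi : dpol X A) (x : X) (a : A) : R :=
  (a == pi x)%:R.

Definition is_occupancy (X A : finType) (R : numDomainType) (gamma : R)
  (p : X -> A -> X -> R) (mu0 : X -> R) (pi : dpol X A) (mu : {ffun X -> R}) : Prop :=
  forall x, mu x = mu0 x + gamma * \sum_(x' : X) \sum_(a : A) p x' a x * dpol_prob R pi x' a * mu x'.

Definition Jdet (X A : finType) (R : numDomainType)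
  (occ : dpol X A -> {ffun X -> R}) (r : X -> A -> {ffun X -> R} -> R)
  (pi : dpol X A) (mu : {ffun X -> R}) : R :=
  \sum_(x : X) \sum_(a : A) occ pi x * dpol_prob R pi x a * r x a mu.

Definition distr_on (X A : finType) (R : numDomainType) (S : {set dpol X A})
  (nu : {ffun dpol X A -> R}) : Prop :=
  (forall q, 0 <= nu q) /\ (forall q, q \notin S -> nu q = 0) /\ \sum_q nu q = 1.

Definition mu_of (X A : finType) (R : numDomainType)
  (occ : dpol X A -> {ffun X -> R}) (nu : {ffun dpol X A -> R}) : {ffun X -> R} :=
  [ffun x => \sum_q nu q * occ q x].

(* J(pi(nu), mu) = sum_pi nu(pi) J(pi, mu) *)
Definition Jmix (X A : finType) (R : numDomainType)
  (occ : dpol X A -> {ffun X -> R}) (r : X -> A -> {ffun X -> R} -> R)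
  (nu : {ffun dpol X A -> R}) (mu : {ffun X -> R}) : R :=
  \sum_q nu q * Jdet occ r q mu.

Definition dirac_pol (X A : finType) (R : numDomainType) (pi : dpol X A) : {ffun dpol X A -> R} :=
  [ffun q => (q == pi)%:R].

Definition gap (X A : finType) (R : numDomainType)
  (occ : dpol X A -> {ffun X -> R}) (r : X -> A -> {ffun X -> R} -> R)
  (nu : {ffun dpol X A -> R}) (pi_i : dpol X A) : R :=
  Jdet occ r pi_i (mu_of occ nu) - Jmix occ r nu (mu_of occ nu).

(* nu in argmin_{nu' in Delta(S)} max_{pi_i in S} gap_i(nu'), with
   "max_i f i <= max_j g j" written out as "forall i in S, exists j in S, f i <= g j"
   (S is nonempty). *)
Definition is_argmin_expl (X A : finType) (R : numDomainType)
  (occ : dpol X A -> {ffun X -> R}) (r : X -> A -> {ffun X -> R} -> R)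
  (S : {set dpol X A}) (nu : {ffun dpol X A -> R}) : Prop :=
  distr_on S nu /\
  forall nu', distr_on S nu' ->
    forall i, i \in S -> exists2 j, j \in S & gap occ r nu i <= gap occ r nu' j.

Definition is_best_response (X A : finType) (R : numDomainType)
  (occ : dpol X A -> {ffun X -> R}) (r : X -> A -> {ffun X -> R} -> R)
  (nu : {ffun dpol X A -> R}) (pnew : dpol X A) : Prop :=
  forall pi : dpol X A, Jdet occ r pi (mu_of occ nu) <= Jdet occ r pnew (mu_of occ nu).

(* A run of MF-PSRO(Nash) (steps numbered 1..n) that terminates at step n:
   Pi k = Pi_k, nu k = nu_k, pnew k = the best response chosen at step k. *)
Definition MFPSRO_run_terminating (X A : finType) (R : numDomainType)
  (occ : dpol X A -> {ffun X -> R}) (r : X -> A -> {ffun X -> R} -> R)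
  (pi1 : dpol X A) (Pi : nat -> {set dpol X A}) (nu : nat -> {ffun dpol X A -> R})
  (pnew : nat -> dpol X A) (n : nat) : Prop :=
  [/\ (1 <= n)%N /\ Pi 1%N = [set pi1], nu 1%N = dirac_pol R pi1,
      (forall k, (1 <= k <= n)%N -> is_best_response occ r (nu k) (pnew k)),
      (forall k, (1 <= k < n)%N ->
         [/\ Pi k.+1 = pnew k |: Pi k, Pi k.+1 != Pi k & is_argmin_expl occ r (Pi k.+1) (nu k.+1)])
    & pnew n |: Pi n = Pi n].

Definition restricted_MFNE (X A : finType) (R : numDomainType)
  (occ : dpol X A -> {ffun X -> R}) (r : X -> A -> {ffun X -> R} -> R)
  (S : {set dpol X A}) (nu : {ffun dpol X A -> R}) : Prop :=
  forall pi_i, pi_i \in S -> Jdet occ r pi_i (mu_of occ nu) <= Jmix occ r nu (mu_of occ nu).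

(* Main.v *)
Require Import Defs.
From HB Require Import structures.
From mathcomp Require Import all_boot all_order all_algebra.
Import Order.TTheory GRing.Theory Num.Theory.
Local Open Scope ring_scope.

Theorem mainTheorem2 (R : realFieldType) (X A : finType)
  (gamma : R) (p : X -> A -> X -> R) (mu0 : X -> R)
  (r : X -> A -> {ffun X -> R} -> R)
  (occ : dpol X A -> {ffun X -> R})
  (pi1 : dpol X A) (Pi : nat -> {set dpol X A}) (nu : nat -> {ffun dpol X A -> R})
  (pnew : nat -> dpol X A) (n : nat) :
  0 <= gamma -> gamma < 1 ->
  (forall x a x', 0 <= p x a x') -> (forall x a, \sum_(x' : X) p x a x' = 1) ->
  (forall x, 0 <= mu0 x) -> \sum_(x : X) mu0 x = 1 ->
  (forall pi : dpol X A, is_occupancy gamma p mu0 pi (occ pi)) ->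
  MFPSRO_run_terminating occ r pi1 Pi nu pnew n ->
  restricted_MFNE occ r (Pi n) (nu n) ->
  forall pi : dpol X A, Jdet occ r pi (mu_of occ (nu n)) <= Jmix occ r (nu n) (mu_of occ (nu n)).
Proof.
move=> _ _ _ _ _ _ _ [[Hn _] _ Hbr _ Hfix] Hne pi.
apply: le_trans (Hbr n _ pi) _; first by rewrite Hn leqnn.
apply: Hne; rewrite -Hfix; exact: setU11.
Qed.
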